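(* Let $a_1,\dots,a_n$ and $b_1,\dots,b_n$ be mutually commuting families of bosonic operators ($[a_i,a_j^\dagger]=[b_i,b_j^\dagger]=\delta_{ij}$, all other commutators among $a_i,a_i^\dagger,b_j,b_j^\dagger$ zero), and let $H=\sum_{i,j=1}^n\left(\alpha_{ij}a_i^\dagger a_j+\varepsilon_{ij}b_i^\dagger b_j+\gamma_{ij}a_i^\dagger b_j^\dagger+\gamma_{ji}^*a_ib_j\right)$ with $\alpha,\varepsilon$ complex Hermitian and $\gamma$ complex with $\gamma^T=\gamma$. Let $\psi=(a_1,\dots,a_n,b_1^\dagger,\dots,b_n^\dagger)^T$ and let $D$ be the $2n\times2n$ dynamic matrix determined by $[\psi_\mu,H]=\sum_\nu D_{\mu\nu}\psi_\nu$. Then $H$ is BV diagonalizable if and only if $D$ is physically diagonalizable.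
   Context: Here $H$ is called BV diagonalizable if there exist $2n$ operators $e_1,\dots,e_{2n}$, each a complex linear combination of $a_i,a_i^\dagger,b_i,b_i^\dagger$, satisfying the standard bosonic relations $[e_k,e_l^\dagger]=\delta_{kl}$, $[e_k,e_l]=0$, and real numbers $\lambda_1,\dots,\lambda_{2n},C$ with $H=\sum_k\lambda_ke_k^\dagger e_k+C$. A matrix is physically diagonalizable if it is diagonalizable over $\mathbb{C}$ and all its eigenvalues are real. *)

(* Defs.v *)
From HB Require Import structures.
From mathcomp Require Import all_boot all_order all_algebra.
Set Implicit Arguments. Unset Strict Implicit. Unset Printing Implicit Defensive.
Import Order.TTheory GRing.Theory Num.Theory.
Local Open Scope ring_scope.

(* Complex scalars: an arbitrary numClosedFieldType C (e.g. algC), with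
   complex conjugation z^* and the real elements [Num.real].
   The operator algebra: an arbitrary C-algebra A with 1 != 0 (algType is
   a nzRingType).  The bosonic modes are elements
   a i, ad i (= a_i^dagger), b i, bd i (= b_i^dagger) of A. *)

Definition comm (C : numClosedFieldType) (A : algType C) (x y : A) : A :=
  x * y - y * x.

Definition CCR (C : numClosedFieldType) (A : algType C) (n : nat)
    (a ad b bd : 'I_n -> A) : Prop :=
  forall i j : 'I_n,
    [/\ comm (a i) (ad j) = (i == j)%:R, comm (b i) (bd j) = (i == j)%:R,
        comm (a i) (a j) = 0, comm (ad i) (ad j) = 0 &
        [/\ comm (b i) (b j) = 0, comm (bd i) (bd j) = 0,
            comm (a i) (b j) = 0, comm (a i) (bd j) = 0 &
            [/\ comm (ad i) (b j) = 0 & comm (ad i) (bd j) = 0]]].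

Definition lincomb (C : numClosedFieldType) (A : algType C) (n : nat)
    (a ad b bd : 'I_n -> A) (p q r s : 'I_n -> C) : A :=
  \sum_(i < n) (p i *: a i + q i *: ad i + r i *: b i + s i *: bd i).

(* its adjoint (the dagger is antilinear and swaps x with x^dag) *)
Definition lincomb_adj (C : numClosedFieldType) (A : algType C) (n : nat)
    (a ad b bd : 'I_n -> A) (p q r s : 'I_n -> C) : A :=
  lincomb a ad b bd (fun i => (q i)^*) (fun i => (p i)^*)
                    (fun i => (s i)^*) (fun i => (r i)^*).

Definition hamiltonian (C : numClosedFieldType) (A : algType C) (n : nat)
    (a ad b bd : 'I_n -> A) (alpha eps gamma : 'M[C]_n) : A :=
  \sum_(i < n) \sum_(j < n)
    (alpha i j *: (ad i * a j) + eps i j *: (bd i * b j)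
     + gamma i j *: (ad i * bd j) + (gamma j i)^* *: (a i * b j)).

Definition psi (C : numClosedFieldType) (A : algType C) (n : nat)
    (a bd : 'I_n -> A) (mu : 'I_(n + n)) : A :=
  match split mu with inl i => a i | inr i => bd i end.

Definition is_dynamic_matrix (C : numClosedFieldType) (A : algType C) (n : nat)
    (a bd : 'I_n -> A) (H : A) (D : 'M[C]_(n + n)) : Prop :=
  forall mu : 'I_(n + n),
    comm (psi a bd mu) H = \sum_(nu < n + n) D mu nu *: psi a bd nu.

Definition BV_diagonalizable (C : numClosedFieldType) (A : algType C) (n : nat)
    (a ad b bd : 'I_n -> A) (H : A) : Prop :=
  exists (P Q R S : 'I_(n + n) -> 'I_n -> C) (lambda : 'I_(n + n) -> C) (c : C),
    let e k := lincomb a ad b bd (P k) (Q k) (R k) (S k) in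
    let edag k := lincomb_adj a ad b bd (P k) (Q k) (R k) (S k) in
    [/\ forall k l, comm (e k) (edag l) = (k == l)%:R,
        forall k l, comm (e k) (e l) = 0,
        forall k, lambda k \is Num.real,
        c \is Num.real &
        H = \sum_(k < n + n) lambda k *: (edag k * e k) + c%:A].

Definition phys_diagonalizable (C : numClosedFieldType) (m : nat) (D : 'M[C]_m) : Prop :=
  diagonalizable D /\ forall x : C, eigenvalue D x -> x \is Num.real.

(* Main.v *)
Require Import Defs.
From HB Require Import structures.
From mathcomp Require Import all_boot all_order all_algebra ring.
Set Implicit Arguments. Unset Strict Implicit. Unset Printing Implicit Defensive.
Import Order.TTheory GRing.Theory Num.Theory.
Local Open Scope ring_scope.

Section Ops.
Variables (C : numClosedFieldType) (A : algType C).
Implicit Types (x y z : A) (c : C).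

Lemma commDr x y z : comm x (y + z) = comm x y + comm x z.
Proof. by rewrite /comm mulrDr mulrDl opprD addrACA. Qed.
Lemma commDl x y z : comm (x + y) z = comm x z + comm y z.
Proof. by rewrite /comm mulrDr mulrDl opprD addrACA. Qed.
Lemma commZr c x y : comm x (c *: y) = c *: comm x y.
Proof. by rewrite /comm scalerBr -scalerAl -scalerAr. Qed.
Lemma commZl c x y : comm (c *: x) y = c *: comm x y.
Proof. by rewrite /comm scalerBr -scalerAl -scalerAr. Qed.
Lemma commN x y : comm y x = - comm x y.
Proof. by rewrite /comm opprB. Qed.
Lemma comm_sumr I (r : seq I) (P : pred I) (F : I -> A) x :
  comm x (\sum_(i <- r | P i) F i) = \sum_(i <- r | P i) comm x (F i).
Proof. by rewrite /comm mulr_sumr mulr_suml -sumrB. Qed.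
Lemma comm_suml I (r : seq I) (P : pred I) (F : I -> A) x :
  comm (\sum_(i <- r | P i) F i) x = \sum_(i <- r | P i) comm (F i) x.
Proof. by rewrite /comm mulr_sumr mulr_suml -sumrB. Qed.
Lemma commMr x y z : comm x (y * z) = comm x y * z + y * comm x z.
Proof. by rewrite /comm mulrBl mulrBr !mulrA addrA subrK. Qed.
Lemma commMl x y z : comm (x * y) z = x * comm y z + comm x z * y.
Proof. by rewrite /comm mulrBl mulrBr !mulrA addrA subrK. Qed.
Lemma comm_scal x c : comm x (c%:A) = 0.
Proof. by rewrite commZr /comm mulr1 mul1r subrr scaler0. Qed.
Lemma scal_inj c : c%:A = 0 :> A -> c = 0.
Proof. by move/eqP; rewrite scaler_eq0 oner_eq0 orbF => /eqP. Qed.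
Lemma comm0r x : comm x 0 = 0.
Proof. by rewrite /comm mulr0 mul0r subrr. Qed.
End Ops.

Section Bil.
Variables (C : fieldType) (N : nat).
Definition bil (u : 'rV[C]_N) (K : 'M[C]_N) (v : 'rV[C]_N) : C := (u *m K *m v^T) 0 0.
Lemma bilinE u K v : bil u K v = \sum_i \sum_j u 0 i * K i j * v 0 j.
Proof.
rewrite /bil mxE exchange_big /=; apply: eq_bigr => i _.
rewrite mxE big_distrl /=; apply: eq_bigr => j _.
by rewrite !mxE.
Qed.
Lemma bil_tr u K v : bil u K v = bil v K^T u.
Proof.
rewrite !bilinE exchange_big /=; apply: eq_bigr => i _; apply: eq_bigr => j _.
by rewrite mxE; ring.
Qed.
Lemma bil_delta u K j : bil u K (delta_mx 0 j) = (u *m K) 0 j.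
Proof.
rewrite /bil mxE (bigD1 j) //= big1 => [|k /negbTE nkj]; rewrite !mxE ?eqxx ?mulr1 ?addr0 //.
by rewrite nkj mulr0.
Qed.
End Bil.

Section Lin.
Variables (C : numClosedFieldType) (A : algType C) (N : nat).
Variables (p d : 'I_N -> A) (E : 'M[C]_N).
Hypotheses (pp : forall i j, comm (p i) (p j) = 0)
           (dd : forall i j, comm (d i) (d j) = 0)
           (pd : forall i j, comm (p i) (d j) = (E i j)%:A)
           (Esym : E^T = E) (EE : E *m E = 1%:M).

Definition Lf (f : 'I_N -> A) (u : 'rV[C]_N) : A := \sum_i u 0 i *: f i.
Definition L u w := Lf p u + Lf d w.
Definition Q (K : 'M[C]_N) : A := \sum_i \sum_j K i j *: (d i * p j).

Lemma LfD f u v : Lf f (u + v) = Lf f u + Lf f v.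
Proof. by rewrite /Lf -big_split; apply: eq_bigr => i _; rewrite mxE scalerDl. Qed.
Lemma LfZ f c u : Lf f (c *: u) = c *: Lf f u.
Proof. by rewrite /Lf scaler_sumr; apply: eq_bigr => i _; rewrite mxE scalerA. Qed.
Lemma LfN f u : Lf f (- u) = - Lf f u.
Proof. by rewrite -scaleN1r LfZ scaleN1r. Qed.
Lemma Lf0 f : Lf f 0 = 0.
Proof. by rewrite /Lf big1 // => i _; rewrite mxE scale0r. Qed.

Lemma sum_comb (f : 'I_N -> A) (c : 'rV[C]_N) (X : 'M[C]_N) :
  \sum_r c 0 r *: \sum_nu X r nu *: f nu = Lf f (c *m X).
Proof.
rewrite /Lf; under eq_bigr do rewrite scaler_sumr.
rewrite exchange_big /=; apply: eq_bigr => nu _.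
rewrite mxE scaler_suml; apply: eq_bigr => r _; by rewrite scalerA.
Qed.

Lemma comm_pp u u' : comm (Lf p u) (Lf p u') = 0.
Proof.
rewrite comm_suml big1 // => i _; rewrite commZl comm_sumr big1 ?scaler0 // => j _.
by rewrite commZr pp scaler0.
Qed.
Lemma comm_dd w w' : comm (Lf d w) (Lf d w') = 0.
Proof.
rewrite comm_suml big1 // => i _; rewrite commZl comm_sumr big1 ?scaler0 // => j _.
by rewrite commZr dd scaler0.
Qed.
Lemma comm_pd u w : comm (Lf p u) (Lf d w) = (bil u E w)%:A.
Proof.
rewrite bilinE comm_suml scaler_suml; apply: eq_bigr => i _.
rewrite commZl comm_sumr scaler_suml scaler_sumr; apply: eq_bigr => j _.
by rewrite commZr pd !scalerA; congr (_ *: _); ring.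
Qed.

Lemma commL u w u' w' :
  comm (L u w) (L u' w') = (bil u E w' - bil w E u')%:A.
Proof.
rewrite /L commDl !commDr comm_pp comm_dd comm_pd commN comm_pd.
by rewrite add0r addr0 scalerBl (bil_tr u') Esym.
Qed.

Lemma comm_p_Q r K : comm (p r) (Q K) = \sum_nu (E *m K) r nu *: p nu.
Proof.
rewrite comm_sumr.
transitivity (\sum_i \sum_nu (E r i * K i nu) *: p nu).
  apply: eq_bigr => i _; rewrite comm_sumr; apply: eq_bigr => j _.
  by rewrite commZr commMr pp mulr0 addr0 pd -scalerAl mul1r scalerA mulrC.
rewrite exchange_big /=; apply: eq_bigr => nu _.
by rewrite mxE scaler_suml.
Qed.

Lemma comm_d_Q r K : comm (d r) (Q K) = \sum_mu (- (K *m E)^T) r mu *: d mu.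
Proof.
rewrite comm_sumr.
apply: eq_bigr => i _; rewrite !mxE scaleNr scaler_suml -sumrN comm_sumr.
apply: eq_bigr => j _.
by rewrite commZr commMr dd mul0r add0r commN pd mulrN -scalerAr mulr1 scalerN scalerA.
Qed.

Lemma commLQ u w K : comm (L u w) (Q K) = L (u *m (E *m K)) (w *m (- (K *m E)^T)).
Proof.
rewrite /L commDl /Lf !comm_suml.
under eq_bigr do rewrite commZl comm_p_Q.
under [X in _ + X]eq_bigr do rewrite commZl comm_d_Q.
by rewrite !sum_comb.
Qed.

Lemma L_inj u w : L u w = 0 -> u = 0 /\ w = 0.
Proof.
move=> H0.
have Hu : u *m E = 0.
  apply/rowP => j; have := commL u w 0 (delta_mx 0 j).
  rewrite H0 /comm mul0r mulr0 subrr => /esym /scal_inj.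
  by rewrite bil_delta [bil w E 0]bilinE big1 ?subr0 ?mxE // => i _; rewrite big1 // => k _; rewrite mxE mulr0.
have Hw : w *m E = 0.
  apply/rowP => j; have := commL u w (delta_mx 0 j) 0.
  rewrite H0 /comm mul0r mulr0 subrr => /esym /scal_inj.
  rewrite bil_delta [bil u E 0]bilinE big1 ?sub0r ?mxE; last first.
    by move=> i _; rewrite big1 // => k _; rewrite mxE mulr0.
  by move/eqP; rewrite oppr_eq0 => /eqP.
split.
  by rewrite -[u]mulmx1 -EE mulmxA Hu mul0mx.
by rewrite -[w]mulmx1 -EE mulmxA Hw mul0mx.
Qed.
End Lin.

Lemma ord_cases n (mu : 'I_(n + n)) :
  (exists i, mu = lshift n i) \/ (exists i, mu = rshift n i).
Proof. by case: (split_ordP mu) => j ->; [left|right]; exists j. Qed.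

Lemma splitL n (i : 'I_n) : split (lshift n i) = inl i.
Proof. exact: (unsplitK (inl i : 'I_n + 'I_n)). Qed.
Lemma splitR n (i : 'I_n) : split (rshift n i) = inr i.
Proof. exact: (unsplitK (inr i : 'I_n + 'I_n)). Qed.

Section Inst.
Variables (C : numClosedFieldType) (A : algType C) (n : nat).
Variables (a ad b bd : 'I_n -> A).
Hypothesis hCCR : CCR a ad b bd.

Definition psid (mu : 'I_(n + n)) : A :=
  match split mu with inl i => ad i | inr i => b i end.
Definition etaS (mu : 'I_(n + n)) : C :=
  match split mu with inl _ => 1 | inr _ => -1 end.
Definition ETA : 'M[C]_(n + n) := diag_mx (\row_mu etaS mu).

Lemma psiL i : psi a bd (lshift n i) = a i. Proof. by rewrite /psi splitL. Qed.
Lemma psiR i : psi a bd (rshift n i) = bd i. Proof. by rewrite /psi splitR. Qed.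
Lemma psidL i : psid (lshift n i) = ad i. Proof. by rewrite /psid splitL. Qed.
Lemma psidR i : psid (rshift n i) = b i. Proof. by rewrite /psid splitR. Qed.
Lemma etaL i : etaS (lshift n i) = 1. Proof. by rewrite /etaS splitL. Qed.
Lemma etaR i : etaS (rshift n i) = -1. Proof. by rewrite /etaS splitR. Qed.

Lemma ETAE mu nu : ETA mu nu = etaS mu *+ (mu == nu).
Proof. by rewrite !mxE. Qed.

Lemma ETAtr : ETA^T = ETA.
Proof. by rewrite /ETA tr_diag_mx. Qed.

Lemma ETA2 : ETA *m ETA = 1%:M.
Proof.
rewrite /ETA mulmx_diag; apply/matrixP => i j; rewrite !mxE.
case: (ord_cases i) => -[k ->]; rewrite ?etaL ?etaR ?mulr1 //.
by rewrite mulrNN mulr1.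
Qed.

Lemma ETA_real mu nu : (ETA mu nu)^* = ETA mu nu.
Proof.
rewrite ETAE; case: (mu == nu); rewrite ?mulr0n ?mulr1n ?conjC0 //.
by case: (ord_cases mu) => -[k ->]; rewrite ?etaL ?etaR ?conjC1 ?rmorphN1.
Qed.

Lemma CCR_pp mu nu : comm (psi a bd mu) (psi a bd nu) = 0.
Proof.
case: (ord_cases mu) => -[i ->]; case: (ord_cases nu) => -[j ->];
  rewrite ?psiL ?psiR; have [h1 h2 h3 h4 [h5 h6 h7 h8 [h9 h10]]] := hCCR i j;
  have [g1 g2 g3 g4 [g5 g6 g7 g8 [g9 g10]]] := hCCR j i => //.
by rewrite commN g8 oppr0.
Qed.

Lemma CCR_dd mu nu : comm (psid mu) (psid nu) = 0.
Proof.
case: (ord_cases mu) => -[i ->]; case: (ord_cases nu) => -[j ->];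
  rewrite ?psidL ?psidR; have [h1 h2 h3 h4 [h5 h6 h7 h8 [h9 h10]]] := hCCR i j;
  have [g1 g2 g3 g4 [g5 g6 g7 g8 [g9 g10]]] := hCCR j i => //.
by rewrite commN g9 oppr0.
Qed.

Lemma CCR_pd mu nu : comm (psi a bd mu) (psid nu) = (ETA mu nu)%:A.
Proof.
rewrite ETAE.
case: (ord_cases mu) => -[i ->]; case: (ord_cases nu) => -[j ->];
  rewrite ?psiL ?psiR ?psidL ?psidR ?etaL ?etaR ?eq_lshift ?eq_rshift ?eq_lrshift ?eq_rlshift;
  have [h1 h2 h3 h4 [h5 h6 h7 h8 [h9 h10]]] := hCCR i j;
  have [g1 g2 g3 g4 [g5 g6 g7 g8 [g9 g10]]] := hCCR j i.
- by rewrite h1 -scalerMnl scale1r.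
- by rewrite h7 mulr0n scale0r.
- by rewrite commN g10 oppr0 mulr0n scale0r.
- by rewrite commN g2 -scalerMnl scaleN1r mulNrn eq_sym.
Qed.
End Inst.

Lemma sum4 (V : nmodType) n (F : 'I_(n + n) -> 'I_(n + n) -> V) :
  \sum_mu \sum_nu F mu nu =
  \sum_i \sum_j F (lshift n i) (lshift n j) + \sum_i \sum_j F (lshift n i) (rshift n j)
  + \sum_i \sum_j F (rshift n i) (lshift n j) + \sum_i \sum_j F (rshift n i) (rshift n j).
Proof.
have h mu : \sum_nu F mu nu = \sum_j F mu (lshift n j) + \sum_j F mu (rshift n j).
  by rewrite big_split_ord.
rewrite big_split_ord /=.
under eq_bigr do rewrite h.
under [X in _ + X]eq_bigr do rewrite h.
by rewrite !big_split /= !addrA.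
Qed.

Section Ham.
Variables (C : numClosedFieldType) (A : algType C) (n : nat).
Variables (a ad b bd : 'I_n -> A).
Hypothesis hCCR : CCR a ad b bd.
Variables (alpha eps gamma : 'M[C]_n).

Definition Mblk : 'M[C]_(n + n) := \matrix_(mu, nu)
  match split mu, split nu with
  | inl i, inl j => alpha i j
  | inl i, inr j => gamma i j
  | inr i, inl j => (gamma i j)^*
  | inr i, inr j => eps j i end.

Lemma hamE : hamiltonian a ad b bd alpha eps gamma =
  Q (psi a bd) (psid ad b) Mblk - (\sum_i eps i i)%:A.
Proof.
have -> : Q (psi a bd) (psid ad b) Mblk =
   \sum_i \sum_j alpha i j *: (ad i * a j) + \sum_i \sum_j gamma i j *: (ad i * bd j)
 + \sum_i \sum_j (gamma j i)^* *: (a i * b j)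
 + (\sum_i \sum_j eps i j *: (bd i * b j) + (\sum_i eps i i)%:A).
  rewrite /Q sum4; congr (_ + _ + _ + _).
  - by apply: eq_bigr => i _; apply: eq_bigr => j _; rewrite mxE !splitL psidL psiL.
  - by apply: eq_bigr => i _; apply: eq_bigr => j _; rewrite mxE splitL splitR psidL psiR.
  - rewrite exchange_big /=; apply: eq_bigr => i _; apply: eq_bigr => j _.
    rewrite mxE splitL splitR psidR psiL.
    have [_ _ _ _ [_ _ h _ _]] := hCCR i j.
    by move/eqP: h; rewrite subr_eq0 => /eqP ->.
  - rewrite exchange_big /= scaler_suml -big_split /=; apply: eq_bigr => i _.
    rewrite (bigD1 i) //= [in RHS](bigD1 i) //= addrAC; congr (_ + _).
      rewrite mxE !splitR psidR psiR.
      have [_ h _ _ _] := hCCR i i.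
      move: h; rewrite /comm => /eqP; rewrite subr_eq eqxx => /eqP ->.
      by rewrite scalerDr addrC.
    apply: eq_bigr => j nji.
    rewrite mxE !splitR psidR psiR.
    have [_ h _ _ _] := hCCR j i.
    move: h; rewrite /comm => /eqP; rewrite subr_eq (negbTE nji) add0r => /eqP ->.
    by [].

rewrite /hamiltonian; under eq_bigr do rewrite !big_split; rewrite !big_split /=.
rewrite !addrA addrK.
rewrite -!addrA; congr (_ + _).
by rewrite addrC -addrA.
Qed.
End Ham.

Section EigLA.
Variables (F : fieldType) (m : nat) (D : 'M[F]_m).

Lemma eig_sum_sup rs r : r \in rs ->
  (eigenspace D r <= \sum_(r0 <- rs) eigenspace D r0)%MS.
Proof.
elim: rs => // r0 rs IH; rewrite inE big_cons => /orP [/eqP -> | /IH h].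
  exact: addsmxSl.
exact: submx_trans h (addsmxSr _ _).
Qed.

Lemma sum_sub_seq rs (T : 'M[F]_m) :
  (forall r, r \in rs -> (eigenspace D r <= T)%MS) ->
  (\sum_(r0 <- rs) eigenspace D r0 <= T)%MS.
Proof.
elim: rs => [|r0 rs IH] h; first by rewrite big_nil sub0mx.
rewrite big_cons addsmx_sub h ?mem_head //= IH // => r hr.
by apply: h; rewrite inE hr orbT.
Qed.

Lemma eig_in rs x : uniq rs ->
  (\sum_(r <- rs) eigenspace D r :=: 1%:M)%MS -> eigenvalue D x -> x \in rs.
Proof.
move=> urs hs; apply: contraTT => xn.
set s := x :: rs.
have us : uniq s by rewrite /= xn urs.
have inj : {in predT &, injective (fun i : 'I_(size s) => nth x s i)}.
  move=> i j _ _ /eqP; rewrite nth_uniq // => /eqP; exact: val_inj.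
have := mxdirect_sum_eigenspace D inj.
move/mxdirect_sumsP => /(_ (Ordinal (ltn0Sn (size rs))) isT).
set T := (\sum_(j | _) _)%MS => hT.
have h1 : (1%:M <= T)%MS.
  rewrite -hs; apply: sum_sub_seq => r hr.
  have hi : (index r s < size s)%N by rewrite index_mem /s inE hr orbT.
  apply: (sumsmx_sup (Ordinal hi)) => /=.
    rewrite -val_eqE /= eqn0Ngt negbK.
    by rewrite /s /= ; case: eqP => // exr; rewrite exr hr in xn.
  by rewrite nth_index // /s inE hr orbT.
rewrite /eigenvalue negbK -submx0 -hT sub_capmx submx_refl /=.
exact: submx_trans (submx1 _) h1.
Qed.
End EigLA.

Import Num.Def.

Section Core.
Variables (C : numClosedFieldType) (A : algType C) (N : nat).
Variables (p d : 'I_N -> A) (E K : 'M[C]_N).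
Hypotheses (pp : forall i j, comm (p i) (p j) = 0)
           (dd : forall i j, comm (d i) (d j) = 0)
           (pd : forall i j, comm (p i) (d j) = (E i j)%:A)
           (Esym : E^T = E) (EE : E *m E = 1%:M)
           (Ereal : map_mx conjC E = E) (Kh : map_mx conjC K = K^T).
Variable c0 : C.
Local Notation LL := (L p d).
Local Notation H0 := (Q p d K + c0%:A).
Local Notation "x ^c" := (map_mx conjC x).

Lemma LB u w u' w' : LL (u - u') (w - w') = LL u w - LL u' w'.
Proof. by rewrite /L !LfD !LfN opprD addrACA. Qed.
Lemma LZ c u w : LL (c *: u) (c *: w) = c *: LL u w.
Proof. by rewrite /L !LfZ scalerDr. Qed.
Lemma L_eq u w u' w' : LL u w = LL u' w' -> u = u' /\ w = w'.
Proof.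
move=> h; have := @L_inj C A N p d E pp dd pd Esym EE (u - u') (w - w').
rewrite LB h subrr => /(_ erefl) [/eqP + /eqP]; rewrite !subr_eq0 => /eqP -> /eqP -> //.
Qed.

Lemma bil_entry (U W : 'M[C]_N) k l :
  (U *m E *m W^T) k l = bil (row k U) E (row l W).
Proof.
rewrite /bil !mxE; apply: eq_bigr => j _; rewrite !mxE; congr (_ * _).
by apply: eq_bigr => i _; rewrite !mxE.
Qed.

Lemma mxBE m n (X Y : 'M[C]_(m, n)) i j : (X - Y) i j = X i j - Y i j.
Proof. by rewrite !mxE. Qed.
Lemma mx0E m n i j : (0 : 'M[C]_(m, n)) i j = 0.
Proof. by rewrite mxE. Qed.

Lemma scal_inj2 (c1 c2 : C) : c1%:A = c2%:A :> A -> c1 = c2.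
Proof. by move=> h; apply/eqP; rewrite -subr_eq0; apply/eqP/(@scal_inj C A); rewrite scalerBl h subrr. Qed.

Lemma commH0 u w : comm (LL u w) H0 = LL (u *m (E *m K)) (w *m (- (K *m E)^T)).
Proof. by rewrite commDr comm_scal addr0 (commLQ pp dd pd). Qed.

Lemma conjK : (K *m E)^c = K^T *m E.
Proof. by rewrite map_mxM Kh Ereal. Qed.

Lemma fwd (u w : 'I_N -> 'rV[C]_N) (lam : 'I_N -> C) (c : C) :
  (forall k l, comm (LL (u k) (w k)) (LL (w l)^c (u l)^c) = (k == l)%:R) ->
  (forall k l, comm (LL (u k) (w k)) (LL (u l) (w l)) = 0) ->
  (forall k, lam k \is Num.real) ->
  H0 = \sum_k lam k *: (LL (w k)^c (u k)^c * LL (u k) (w k)) + c%:A ->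
  phys_diagonalizable (E *m K).
Proof.
move=> h1 h2 hr hH.
have eig k : comm (LL (u k) (w k)) H0 = lam k *: LL (u k) (w k).
  rewrite hH commDr comm_scal addr0 comm_sumr (bigD1 k) //= big1 ?addr0.
    by rewrite commZr commMr h1 h2 mulr0 addr0 eqxx mul1r.
  move=> l nlk; rewrite commZr commMr h1 h2 mulr0 addr0 eq_sym (negbTE nlk).
  by rewrite mul0r scaler0.
have [hu hw] : (forall k, u k *m (E *m K) = lam k *: u k) /\
               (forall k, w k *m (- (K *m E)^T) = lam k *: w k).
  split=> k; have := eig k; by rewrite commH0 -LZ => /L_eq [].
have hwc k : (w k)^c *m (E *m K) = (- lam k) *: (w k)^c.
  have := congr1 (map_mx conjC) (hw k).
  rewrite map_mxM map_mxN -map_trmx conjK trmx_mul trmxK Esym map_mxZ.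
  move=> h; have h' : (w k)^c *m - (E *m K) = (lam k)^* *: (w k)^c := h.
  by move: h'; rewrite (conj_Creal (hr k)) mulmxN => h'; rewrite scaleNr -h' opprK.
pose U : 'M[C]_N := \matrix_k u k.
pose W : 'M[C]_N := \matrix_k w k.
have G1 : U *m E *m W^T - W *m E *m U^T = 0.
  apply/matrixP => k l; rewrite mxBE mx0E !bil_entry !rowK.
  by have := h2 k l; rewrite (commL pp dd pd Esym) => /scal_inj.
have G2 : U *m E *m (U^c)^T - W *m E *m (W^c)^T = 1%:M.
  apply/matrixP => k l; rewrite mxBE !bil_entry -!map_row !rowK.
  have := h1 k l; rewrite (commL pp dd pd Esym) !mxE => h.
  by apply: scal_inj2; rewrite h scaler_nat.
pose X := block_mx U W (W^c) (U^c).
pose Om := block_mx 0 E (- E) 0.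
pose J : 'M[C]_(N + N) := block_mx 0 1%:M (- 1%:M) 0.
have G2t : U^c *m E *m U^T - W^c *m E *m W^T = 1%:M.
  have := congr1 trmx G2; rewrite trmx1 => <-.
  by rewrite linearB /= !trmx_mul !trmxK Esym !mulmxA.
have G1c : U^c *m E *m (W^c)^T - W^c *m E *m (U^c)^T = 0.
  have := congr1 (map_mx conjC) G1; rewrite map_mx0 => <-.
  by rewrite map_mxB /= !map_mxM !map_trmx Ereal.
have HX : X *m (Om *m X^T) = J.
  rewrite /X /Om /J tr_block_mx !mulmx_block !mul0mx !add0r !addr0 !mulNmx !mulmxN !mulmxA.
  congr block_mx.
  - exact: G1.
  - exact: G2.
  - by rewrite -G2t opprB.
  - by rewrite -oppr0 -G1c opprB.
have HJ : J *m - J = 1%:M.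
  rewrite /J mulmxN mulmx_block !mulmx0 !mul0mx !mulmx1 !mul1mx !addr0 !add0r.
  by rewrite opp_block_mx !opprK oppr0 -scalar_mx_block.
have Xu : X \in unitmx.
  have hXB : X *m (Om *m X^T *m - J) = 1%:M by rewrite mulmxA HX HJ.
  by case: (mulmx1_unit hXB).
pose Y := col_mx U (W^c).
have HY : Y = X *m col_mx 1%:M 0 by rewrite mul_block_col !mulmx1 !mulmx0 !addr0.
have Yfull : row_full Y.
  apply/row_fullP; exists (row_mx 1%:M 0 *m invmx X).
  by rewrite HY mulmxA -(mulmxA _ (invmx X)) mulVmx // mulmx1 mul_row_col mulmx1 mulmx0 addr0.
pose rs := undup ([seq lam k | k <- enum 'I_N] ++ [seq - lam k | k <- enum 'I_N]).
have hsum : (\sum_(r <- rs) eigenspace (E *m K) r :=: 1%:M)%MS.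
  apply/eqmxP/andP; split; first exact: submx1.
  have h1Y : (1%:M <= Y)%MS by rewrite sub1mx.
  apply: (submx_trans h1Y); rewrite col_mx_sub; apply/andP; split; apply/row_subP => k.
    have hk : (u k <= eigenspace (E *m K) (lam k))%MS by apply/eigenspaceP.
    rewrite rowK; apply: (submx_trans hk).
    apply: eig_sum_sup; rewrite mem_undup mem_cat; apply/orP; left.
    by apply/mapP; exists k; rewrite ?mem_enum.
  have hk : ((w k)^c <= eigenspace (E *m K) (- lam k))%MS by apply/eigenspaceP.
  rewrite -map_row rowK; apply: (submx_trans hk).
  apply: eig_sum_sup; rewrite mem_undup mem_cat; apply/orP; right.
  by apply/mapP; exists k; rewrite ?mem_enum.
split.
  by apply/diagonalizablePeigen; exists rs; [exact: undup_uniq | exact: hsum].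
move=> x hx; have := eig_in (undup_uniq _) hsum hx.
rewrite mem_undup mem_cat => /orP [] /mapP [k _ ->]; first exact: hr.
by rewrite rpredN; exact: hr.
Qed.
End Core.

Section MxC.
Variable C : numClosedFieldType.
Local Notation "x ^c" := (map_mx conjC x).

Lemma conjmxK m n (X : 'M[C]_(m, n)) : X^c^c = X.
Proof. by apply/matrixP => i j; rewrite !mxE conjCK. Qed.

Lemma row_unit_neq0 n (P : 'M[C]_n) k : P \in unitmx -> row k P != 0.
Proof.
move=> Pu; apply/eqP => h; have := congr1 (mulmx^~ (invmx P)) h.
rewrite /= -row_mul mulmxV // mul0mx row1 => /rowP /(_ k); rewrite !mxE !eqxx /=.
by move/eqP; rewrite oner_eq0.
Qed.

Lemma herm_sandwich n (P X : 'M[C]_n) : X^c = X^T ->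
  (P *m X *m (P^c)^T)^c = (P *m X *m (P^c)^T)^T.
Proof.
move=> hX; rewrite !map_mxM hX -map_trmx conjmxK !trmx_mul trmxK mulmxA.
by [].
Qed.

Lemma trig_herm_diag n (Z : 'M[C]_n) : is_trig_mx Z -> Z^c = Z^T ->
  forall i j, i != j -> Z i j = 0.
Proof.
move=> /is_trig_mxP hZ hc i j; rewrite neq_ltn => /orP [] lt.
  by rewrite hZ.
have := congr1 (fun M : 'M[C]_n => M i j) hc; rewrite !mxE (hZ j i lt) => /eqP.
by rewrite conjC_eq0 => /eqP.
Qed.

Lemma herm_diag_real n (Z : 'M[C]_n) i : Z^c = Z^T -> Z i i \is Num.real.
Proof. by move=> hc; apply/CrealP; have := congr1 (fun M : 'M[C]_n => M i i) hc; rewrite !mxE. Qed.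

Lemma diag_eq n (Z : 'M[C]_n) : (forall i j, i != j -> Z i j = 0) ->
  Z = diag_mx (\row_k Z k k).
Proof.
move=> h; apply/matrixP => i j; rewrite !mxE; case: (eqVneq i j) => [->|nij].
  by rewrite mulr1n.
by rewrite h // mulr0n.
Qed.

Lemma diag_unit_neq0 n (d : 'rV[C]_n) k : diag_mx d \in unitmx -> d 0 k != 0.
Proof.
move=> /(row_unit_neq0 k); apply: contraNneq => h; apply/eqP/rowP => j.
by rewrite !mxE h mul0rn.
Qed.

Lemma bil_conj N (u : 'M[C]_N) (x y : 'rV[C]_N) :
  (bil x u y)^* = bil x^c u^c y^c.
Proof.
rewrite !bilinE rmorph_sum; apply: eq_bigr => i _; rewrite rmorph_sum.
by apply: eq_bigr => j _; rewrite !rmorphM !mxE.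
Qed.

Lemma bil0l N (K : 'M[C]_N) v : bil 0 K v = 0.
Proof. by rewrite /bil !mul0mx mxE. Qed.
Lemma bil0r N (K : 'M[C]_N) v : bil v K 0 = 0.
Proof. by rewrite /bil trmx0 mulmx0 mxE. Qed.
End MxC.

Section Bwd.
Variables (C : numClosedFieldType) (A : algType C) (N : nat).
Variables (p d : 'I_N -> A) (E K : 'M[C]_N).
Hypotheses (pp : forall i j, comm (p i) (p j) = 0)
           (dd : forall i j, comm (d i) (d j) = 0)
           (pd : forall i j, comm (p i) (d j) = (E i j)%:A)
           (Esym : E^T = E) (EE : E *m E = 1%:M)
           (Ereal : map_mx conjC E = E) (Kh : map_mx conjC K = K^T).
Variable c0 : C.
Local Notation LL := (L p d).
Local Notation QQ := (Q p d).
Local Notation H0 := (Q p d K + c0%:A).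
Local Notation "x ^c" := (map_mx conjC x).

Lemma QD X Y : QQ (X + Y) = QQ X + QQ Y.
Proof.
rewrite /Q -big_split; apply: eq_bigr => i _; rewrite -big_split.
by apply: eq_bigr => j _; rewrite mxE scalerDl.
Qed.
Lemma Q0 : QQ 0 = 0.
Proof. by rewrite /Q big1 // => i _; rewrite big1 // => j _; rewrite mxE scale0r. Qed.
Lemma QZ c X : QQ (c *: X) = c *: QQ X.
Proof.
rewrite /Q scaler_sumr; apply: eq_bigr => i _; rewrite scaler_sumr.
by apply: eq_bigr => j _; rewrite mxE scalerA.
Qed.
Lemma Qsum (X : 'I_N -> 'M[C]_N) : QQ (\sum_k X k) = \sum_k QQ (X k).
Proof. exact: (big_morph _ QD Q0). Qed.

Lemma prodQ w u : Lf d w * Lf p u = QQ (w^T *m u).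
Proof.
rewrite /Lf /Q mulr_suml; apply: eq_bigr => i _; rewrite mulr_sumr.
apply: eq_bigr => j _; rewrite mxE big_ord1 !mxE -scalerAl -scalerAr scalerA.
by rewrite mulrC.
Qed.

Lemma L0l w : LL 0 w = Lf d w. Proof. by rewrite /L Lf0 add0r. Qed.
Lemma L0r u : LL u 0 = Lf p u. Proof. by rewrite /L Lf0 addr0. Qed.

Lemma comm_swap (x y : A) : x * y = y * x + comm x y.
Proof. by rewrite /comm addrC subrK. Qed.

Lemma bwd : c0 \is Num.real -> phys_diagonalizable (E *m K) ->
  exists (u w : 'I_N -> 'rV[C]_N) (lam : 'I_N -> C) (c : C),
  [/\ forall k l, comm (LL (u k) (w k)) (LL (w l)^c (u l)^c) = (k == l)%:R,
      forall k l, comm (LL (u k) (w k)) (LL (u l) (w l)) = 0,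
      forall k, lam k \is Num.real, c \is Num.real &
      H0 = \sum_k lam k *: (LL (w k)^c (u k)^c * LL (u k) (w k)) + c%:A].
Proof.
move=> c0r [[P0 P0u /similar_diagPex [dv /(similarP P0u) hP0]] hreal].
have dreal k : dv 0 k \is Num.real.
  apply: hreal; apply/eigenvalueP; exists (row k P0); last exact: row_unit_neq0.
  by rewrite -row_mul hP0 mul_diag_mx; apply/rowP => j; rewrite !mxE.
pose Lam := diag_mx dv.
have LamT : Lam^T = Lam by rewrite tr_diag_mx.
have Lamc : Lam^c = Lam.
  apply/matrixP => i j; rewrite !mxE.
  by case: (i == j); rewrite ?mulr1n ?mulr0n ?conjC0 ?conj_Creal.
have EcT : E^c = E^T by rewrite Ereal Esym.
pose G := P0 *m E *m (P0^c)^T.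
have Gc : G^c = G^T := herm_sandwich P0 EcT.
have hP0t : K *m E *m (P0^c)^T = (P0^c)^T *m Lam.
  have := congr1 (fun M => (M^c)^T) hP0; rewrite /= !map_mxM !trmx_mul Ereal Kh trmxK Esym.
  move=> h; apply: (etrans h); congr (_ *m _); exact: (etrans (congr1 trmx Lamc) LamT).
have hcomm : G *m Lam = Lam *m G.
  rewrite /G -mulmxA -hP0t !mulmxA -(mulmxA P0 E K) hP0.
  by rewrite -!mulmxA.
have [Pu Puu /andP [trG trL]] := cotrigonalization2 hcomm.
have Punit : Pu \in unitmx := unitarymx_unit Puu.
have hPu1 : Pu *m (Pu^c)^T = 1%:M.
  by have := unitarymxP Puu; rewrite -map_trmx.
have hPu2 : (Pu^c)^T *m Pu = 1%:M := mulmx1C hPu1.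
have invPu : invmx Pu = (Pu^c)^T.
  by rewrite -[invmx Pu]mulmx1 -hPu1 mulmxA mulVmx // mul1mx.
pose T := Pu *m G *m (Pu^c)^T.
pose Lp := Pu *m Lam *m (Pu^c)^T.
have Tc : T^c = T^T := herm_sandwich Pu Gc.
have Lpc : Lp^c = Lp^T by apply: herm_sandwich; rewrite Lamc LamT.
have Tdiag := trig_herm_diag (_ : is_trig_mx T) Tc.
have Ldiag := trig_herm_diag (_ : is_trig_mx Lp) Lpc.
move: trG trL; rewrite /similar_to !conjumx // invPu => /Tdiag {}Tdiag /Ldiag {}Ldiag.
pose U0 := Pu *m P0.
have hU0 : U0 *m (E *m K) = Lp *m U0.
  rewrite /U0 /Lp -mulmxA hP0 !mulmxA -(mulmxA _ _ Pu) hPu2 mulmx1.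
  by rewrite -!mulmxA.
have hU0T : U0 *m E *m (U0^c)^T = T.
  by rewrite /U0 /T /G map_mxM trmx_mul !mulmxA.
have Eu : E \in unitmx by case: (mulmx1_unit EE).
have Tu : T \in unitmx.
  rewrite -hU0T !unitmx_mul unitmx_tr map_unitmx /U0 unitmx_mul Punit P0u Eu.
  by [].
have TE : T = diag_mx (\row_k T k k) := diag_eq Tdiag.
have LpE : Lp = diag_mx (\row_k Lp k k) := diag_eq Ldiag.
have tnz k : T k k != 0.
  by have := diag_unit_neq0 k (etrans (esym (congr1 (fun M => M \in unitmx) TE)) Tu); rewrite mxE.
have treal k : T k k \is Num.real := herm_diag_real k Tc.
have lreal k : Lp k k \is Num.real := herm_diag_real k Lpc.
pose pos k := 0 < T k k.
pose sg k : C := if pos k then 1 else -1.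
pose s : 'rV[C]_N := \row_k (sqrtC `|T k k|)^-1.
have sreal k : (s 0 k)^* = s 0 k.
  by apply: conj_Creal; apply: ger0_real; rewrite mxE invr_ge0 sqrtC_ge0 normr_ge0.
have sst k : s 0 k * T k k * s 0 k = sg k.
  rewrite mxE mulrAC -expr2 exprVn sqrtCK /sg /pos; case: ifP => hp.
    by rewrite gtr0_norm // mulVf.
  have tneg : T k k < 0.
    rewrite real_ltNge ?real0 // le_eqVlt hp orbF eq_sym.
    exact: tnz.
  by rewrite ltr0_norm // invrN mulNr mulVf.
pose U := diag_mx s *m U0.
have hs : ((diag_mx s)^c)^T = diag_mx s.
  rewrite map_diag_mx tr_diag_mx; congr diag_mx; apply/rowP => j.
  rewrite [LHS]mxE; exact: sreal j.
have hUT : U *m E *m (U^c)^T = diag_mx (\row_k sg k).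
  rewrite /U map_mxM trmx_mul hs.
  have -> : diag_mx s *m U0 *m E *m ((U0^c)^T *m diag_mx s) =
            diag_mx s *m (U0 *m E *m (U0^c)^T) *m diag_mx s by rewrite !mulmxA.
  rewrite hU0T.
  rewrite TE !mulmx_diag; congr diag_mx; apply/rowP => k; rewrite !mxE.
  by have := sst k; rewrite !mxE.
have hU : U *m (E *m K) = diag_mx (\row_k Lp k k) *m U.
  by rewrite /U -mulmxA hU0 {1}LpE mulmxA diag_mxC -mulmxA.
have FF k l : bil (row k U) E (row l U)^c = sg k *+ (k == l).
  by rewrite map_row -bil_entry hUT !mxE.
have sgc k : (sg k)^* = sg k.
  by rewrite /sg; case: ifP => _; rewrite ?conjC1 ?rmorphN1.
have FFc k l : bil (row k U)^c E (row l U) = sg k *+ (k == l).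
  have h := congr1 conjC (FF k l); rewrite bil_conj in h.
  have e1 : bil (row k U)^c E (row l U) = bil (row k U)^c E^c ((row l U)^c)^c.
    by rewrite Ereal conjmxK.
  rewrite e1; apply: (etrans h).
  by case: (k == l); rewrite ?mulr1n ?mulr0n ?conjC0 ?sgc.
have sgpos : forall k, pos k -> sg k = 1.
  by move=> k hp; rewrite /sg hp.
have sgneg : forall k, ~~ pos k -> sg k = -1.
  by move=> k hp; rewrite /sg (negbTE hp).
pose u k := if pos k then row k U else 0.
pose w k := if pos k then 0 else (row k U)^c.
pose lam k := sg k * Lp k k.
pose cneg := \sum_k (if pos k then 0 else Lp k k).
exists u, w, lam, (c0 - cneg); split.
- move=> k l; rewrite (commL pp dd pd Esym) /u /w.
  case: (boolP (pos k)) => hk; case: (boolP (pos l)) => hl;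
    rewrite ?map_mx0 ?conjmxK ?bil0l ?bil0r ?FF ?FFc ?subr0 ?sub0r.
  + by rewrite sgpos // -scalerMnl scale1r.
  + have nkl : k != l by apply: contraNneq hl => <-.
    by rewrite (negbTE nkl) scale0r.
  + have nkl : k != l by apply: contraNneq hk => ->.
    by rewrite (negbTE nkl) scale0r.
  + by rewrite sgneg // mulNrn opprK -scalerMnl scale1r.
- move=> k l; rewrite (commL pp dd pd Esym) /u /w.
  case: (boolP (pos k)) => hk; case: (boolP (pos l)) => hl;
    rewrite ?map_mx0 ?conjmxK ?bil0l ?bil0r ?FF ?FFc ?subr0 ?sub0r ?scale0r //.
  + have nkl : k != l by apply: contraNneq hl => <-.
    by rewrite (negbTE nkl) mulr0n scale0r.
  + have nkl : k != l by apply: contraNneq hk => ->.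
    by rewrite (negbTE nkl) mulr0n oppr0 scale0r.
- move=> k; apply: rpredM; last exact: lreal.
  by rewrite /sg; case: ifP => _; rewrite ?rpredN ?real1.
- apply: rpredB => //; apply: rpred_sum => k _; case: ifP => _ //.
  exact: real0.
clearbody U Lp T.
have ee k : LL (w k)^c (u k)^c * LL (u k) (w k) =
    QQ (((row k U)^c)^T *m row k U) + (if pos k then 0 else -1)%:A.
  rewrite /u /w; case: ifP => hk.
    by rewrite map_mx0 L0l L0r prodQ scale0r addr0.
  rewrite map_mx0 conjmxK L0l L0r comm_swap prodQ (comm_pd pd) FF eqxx mulr1n.
  by rewrite sgneg ?hk.
have S2 : diag_mx (\row_k sg k) *m diag_mx (\row_k sg k) = 1%:M.
  rewrite mulmx_diag; apply/matrixP => i j; rewrite !mxE.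
  by rewrite /sg; case: ifP => _; rewrite ?mulr1 ?mulrNN ?mulr1.
have hSU : (U^c)^T *m diag_mx (\row_k sg k) *m U = E.
  have h1 : U *m (E *m (U^c)^T *m diag_mx (\row_k sg k)) = 1%:M.
    by rewrite !mulmxA hUT S2.
  have h2 := mulmx1C h1.
  have := congr1 (mulmx E) h2; rewrite mulmx1 !mulmxA EE mul1mx.
  by rewrite -!mulmxA.
have Ksum : \sum_k lam k *: (((row k U)^c)^T *m row k U) = K.
  transitivity ((U^c)^T *m diag_mx (\row_k lam k) *m U).
    apply/matrixP => i j; rewrite summxE mul_mx_diag [RHS]mxE; apply: eq_bigr => k _.
    rewrite !mxE big_ord1 !mxE; ring.
  have -> : diag_mx (\row_k lam k) = diag_mx (\row_k sg k) *m diag_mx (\row_k Lp k k).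
    by rewrite mulmx_diag; congr diag_mx; apply/rowP => k; rewrite !mxE.
  by rewrite !mulmxA -(mulmxA _ (diag_mx _) U) -hU mulmxA hSU mulmxA EE mul1mx.
rewrite (eq_bigr (fun k => QQ (lam k *: (((row k U)^c)^T *m row k U))
   + (lam k * (if pos k then 0 else -1))%:A)); last first.
  by move=> k _; rewrite ee scalerDr QZ scalerA.
rewrite big_split /= -Qsum Ksum -scaler_suml.
have -> : \sum_k lam k * (if pos k then 0 else -1) = cneg.
  apply: eq_bigr => k _; rewrite /lam; case: ifP => hk; rewrite ?mulr0 //.
  by rewrite sgneg ?hk // mulrN1 mulN1r opprK.
by rewrite -addrA -scalerDl [cneg + _]addrC subrK.
Qed.
End Bwd.

Section Glue.
Variables (C : numClosedFieldType) (A : algType C) (n : nat).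
Variables (a ad b bd : 'I_n -> A).
Local Notation "x ^c" := (map_mx conjC x).

Definition rowcat (f g : 'I_n -> C) : 'rV[C]_(n + n) :=
  \row_mu match split mu with inl i => f i | inr i => g i end.

Lemma rowcatL f g i : rowcat f g 0 (lshift n i) = f i.
Proof. by rewrite mxE splitL. Qed.
Lemma rowcatR f g i : rowcat f g 0 (rshift n i) = g i.
Proof. by rewrite mxE splitR. Qed.

Lemma rowcat_conj f g : rowcat (fun i => (f i)^*) (fun i => (g i)^*) = (rowcat f g)^c.
Proof.
apply/rowP => mu; rewrite [RHS]mxE.
by case: (ord_cases mu) => -[i ->]; rewrite ?rowcatL ?rowcatR.
Qed.

Lemma lincombE (p q r s : 'I_n -> C) :
  lincomb a ad b bd p q r s = L (psi a bd) (psid ad b) (rowcat p s) (rowcat q r).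
Proof.
have hp : Lf (psi a bd) (rowcat p s) = \sum_i p i *: a i + \sum_i s i *: bd i.
  rewrite /Lf big_split_ord /=; congr (_ + _); apply: eq_bigr => i _.
    by rewrite rowcatL psiL.
  by rewrite rowcatR psiR.
have hd : Lf (psid ad b) (rowcat q r) = \sum_i q i *: ad i + \sum_i r i *: b i.
  rewrite /Lf big_split_ord /=; congr (_ + _); apply: eq_bigr => i _.
    by rewrite rowcatL psidL.
  by rewrite rowcatR psidR.
rewrite /lincomb /L hp hd !big_split /=.
set x := \sum_i _ *: a i; set y := \sum_i _ *: ad i.
set z := \sum_i _ *: b i; set t := \sum_i _ *: bd i.
by rewrite -[x + t + _]addrA [t + (y + z)]addrC !addrA.
Qed.

Lemma lincomb_adjE (p q r s : 'I_n -> C) :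
  lincomb_adj a ad b bd p q r s =
  L (psi a bd) (psid ad b) (rowcat q r)^c (rowcat p s)^c.
Proof. by rewrite /lincomb_adj lincombE !rowcat_conj. Qed.
End Glue.

Lemma Kherm (C : numClosedFieldType) (n : nat) (alpha eps gamma : 'M[C]_n) :
  (forall i j, alpha j i = (alpha i j)^*) ->
  (forall i j, eps j i = (eps i j)^*) ->
  (forall i j, gamma j i = gamma i j) ->
  map_mx conjC (Mblk alpha eps gamma) = (Mblk alpha eps gamma)^T.
Proof.
move=> ha he hg; apply/matrixP => mu nu; rewrite !mxE.
case: (ord_cases mu) => -[i ->]; case: (ord_cases nu) => -[j ->];
  rewrite ?splitL ?splitR.
- by rewrite (ha i j).
- by rewrite (hg i j).
- by rewrite conjCK (hg i j).
- by rewrite (he i j) conjCK.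
Qed.

Lemma ETAc (C : numClosedFieldType) (n : nat) : map_mx conjC (@ETA C n) = ETA C n.
Proof. by apply/matrixP => i j; rewrite [LHS]mxE ETA_real. Qed.

Theorem proposition5 (C : numClosedFieldType) (A : algType C) (n : nat)
    (a ad b bd : 'I_n -> A) (alpha eps gamma : 'M[C]_n) (D : 'M[C]_(n + n)) :
  CCR a ad b bd ->
  (forall i j, alpha j i = (alpha i j)^*) ->
  (forall i j, eps j i = (eps i j)^*) ->
  (forall i j, gamma j i = gamma i j) ->
  is_dynamic_matrix a bd (hamiltonian a ad b bd alpha eps gamma) D ->
  (BV_diagonalizable a ad b bd (hamiltonian a ad b bd alpha eps gamma)
   <-> phys_diagonalizable D).
Proof.
move=> hC ha he hg hD.
have pp := CCR_pp hC; have dd := CCR_dd hC; have pd := CCR_pd hC.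
have Esym := @ETAtr C n; have EE := @ETA2 C n; have Ereal := @ETAc C n.
have Kh := Kherm ha he hg.
set K := Mblk alpha eps gamma.
set c0 := - \sum_i eps i i.
have c0r : c0 \is Num.real.
  rewrite rpredN; apply: rpred_sum => i _; apply/CrealP; by rewrite -he.
have hH : hamiltonian a ad b bd alpha eps gamma = Q (psi a bd) (psid ad b) K + c0%:A.
  by rewrite (hamE hC) /c0 scaleNr.
have hDE : D = ETA C n *m K.
  apply/row_matrixP => mu.
  have h := hD mu; rewrite hH commDr comm_scal addr0 (comm_p_Q pp pd) in h.
  have : L (psi a bd) (psid ad b) (row mu D) 0 = L (psi a bd) (psid ad b) (row mu (ETA C n *m K)) 0.
    rewrite /L !Lf0 !addr0 /Lf.
    rewrite (eq_bigr (fun nu => D mu nu *: psi a bd nu)); last by move=> nu _; rewrite mxE.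
    by rewrite -h; apply: eq_bigr => nu _; congr (_ *: _); symmetry; rewrite mxE.
  by move/(L_eq pp dd pd Esym EE) => [].
rewrite hH hDE; split.
- move=> [P [Qc [R [S [lam [c]]]]]] /= [h1 h2 h3 h4 h5].
  apply: (@fwd C A _ (psi a bd) (psid ad b) (ETA C n) K pp dd pd Esym EE Ereal Kh c0
     (fun k => rowcat (P k) (S k)) (fun k => rowcat (Qc k) (R k)) lam c).
  + by move=> k l; rewrite -lincomb_adjE -!lincombE.
  + by move=> k l; rewrite -!lincombE.
  + exact: h3.
  + rewrite h5; congr (_ + _); apply: eq_bigr => k _.
    by rewrite -lincomb_adjE -lincombE.
- move=> hphys.
  have [u [w [lam [c [h1 h2 h3 h4 h5]]]]] :=
    @bwd C A _ (psi a bd) (psid ad b) (ETA C n) K pp dd pd Esym EE Ereal Kh c0 c0r hphys.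
  pose P k i := u k 0 (lshift n i). pose S k i := u k 0 (rshift n i).
  pose Qc k i := w k 0 (lshift n i). pose R k i := w k 0 (rshift n i).
  have hu k : rowcat (P k) (S k) = u k.
    by apply/rowP => mu; case: (ord_cases mu) => -[i ->]; rewrite ?rowcatL ?rowcatR.
  have hw k : rowcat (Qc k) (R k) = w k.
    by apply/rowP => mu; case: (ord_cases mu) => -[i ->]; rewrite ?rowcatL ?rowcatR.
  exists P, Qc, R, S, lam, c => /=; split => //.
  + by move=> k l; rewrite lincomb_adjE lincombE !hu !hw.
  + by move=> k l; rewrite !lincombE !hu !hw.
  + rewrite h5; congr (_ + _); apply: eq_bigr => k _.
    by rewrite lincomb_adjE lincombE !hu !hw.
Qed.
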